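(* Let $\beta_1,\beta_2,\gamma,\rho_1,\rho_2>0$, let $\sigma_1,\sigma_2>0$ with $\sigma_1+\sigma_2=1$, let $\alpha_2\ge 0$, $\alpha_3>0$, and let $0\le u_{\max}<1$. For a point $(s,e,i,j)$ with $s,e,i,j>0$ define \[ \begin{aligned} F(s,e,i,j)=\Bigl\{z=(z_1,\dots,z_5):\ & z_1=-s\bigl(\beta_1(1-u)^2 i+\beta_2(1-u)j\bigr),\\ & z_2=s\bigl(\beta_1(1-u)^2 i+\beta_2(1-u)j\bigr)-\gamma e,\\ & z_3=\sigma_1\gamma e-\rho_1 i,\quad z_4=\sigma_2\gamma e-\rho_2 j,\\ & z_5\ge \alpha_2(e+i+j)+0.5\alpha_3u^2,\ \text{for some } u\in[0,u_{\max}]\Bigr\}\subset\mathbb{R}^5 . \end{aligned} \] Then $F(s,e,i,j)$ is a convex set for every point $(s,e,i,j)$ with positive coordinates. *)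

(* Defs.v *)
From HB Require Import structures.
From mathcomp Require Import all_boot all_order all_algebra.
From mathcomp Require Import reals.
Set Implicit Arguments. Unset Strict Implicit. Unset Printing Implicit Defensive.
Import Order.TTheory GRing.Theory Num.Theory.
Local Open Scope ring_scope.

(* The set F(s,e,i,j) subset of R^5, with z = (z_1..z_5) indexed 0..4. *)
Definition Fset (R : realType)
  (beta1 beta2 gamma rho1 rho2 sigma1 sigma2 alpha2 alpha3 umax : R)
  (s e i j : R) (z : 'rV[R]_5) : Prop :=
  exists u : R, 0 <= u /\ u <= umax /\
    z ord0 (inord 0) = - (s * (beta1 * (1 - u) ^+ 2 * i + beta2 * (1 - u) * j)) /\
    z ord0 (inord 1) = s * (beta1 * (1 - u) ^+ 2 * i + beta2 * (1 - u) * j) - gamma * e /\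
    z ord0 (inord 2) = sigma1 * gamma * e - rho1 * i /\
    z ord0 (inord 3) = sigma2 * gamma * e - rho2 * j /\
    z ord0 (inord 4) >= alpha2 * (e + i + j) + 2%:R^-1 * alpha3 * u ^+ 2.

Definition convex_set (R : realType) (n : nat) (A : 'rV[R]_n -> Prop) : Prop :=
  forall (x y : 'rV[R]_n) (t : R), A x -> A y -> 0 <= t -> t <= 1 ->
    A (t *: x + (1 - t) *: y).

(* Main.v *)
Require Import Defs.
From HB Require Import structures.
From mathcomp Require Import all_boot all_order all_algebra.
From mathcomp Require Import reals.
From mathcomp Require Import ring lra.
Import Order.TTheory GRing.Theory Num.Theory.
Local Open Scope ring_scope.

Lemma phi_mono (R : realType) (a b p q : R) : 0 < a -> 0 < b -> 0 <= p -> p < q ->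
  a * p ^+ 2 + b * p < a * q ^+ 2 + b * q.
Proof.
move=> ha hb hp hpq.
have h : 0 < (q - p) * (a * (q + p) + b).
  apply: mulr_gt0; first lra.
  apply: ltr_wpDl; last lra. apply: mulr_ge0; lra.
rewrite -subr_gt0.
have -> : a * q ^+ 2 + b * q - (a * p ^+ 2 + b * p) = (q - p) * (a * (q + p) + b) by ring.
exact: h.
Qed.

Lemma phi_le (R : realType) (a b p q : R) : 0 < a -> 0 < b -> 0 <= p -> p <= q ->
  a * p ^+ 2 + b * p <= a * q ^+ 2 + b * q.
Proof.
move=> ha hb hp; rewrite le_eqVlt => /orP [/eqP -> //|h].
exact/ltW/phi_mono.
Qed.

Theorem lemma2 (R : realType)
  (beta1 beta2 gamma rho1 rho2 sigma1 sigma2 alpha2 alpha3 umax : R)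
  (hb1 : 0 < beta1) (hb2 : 0 < beta2) (hg : 0 < gamma)
  (hr1 : 0 < rho1) (hr2 : 0 < rho2)
  (hs1 : 0 < sigma1) (hs2 : 0 < sigma2) (hs : sigma1 + sigma2 = 1)
  (ha2 : 0 <= alpha2) (ha3 : 0 < alpha3)
  (hu0 : 0 <= umax) (hu1 : umax < 1) :
  forall s e i j : R, 0 < s -> 0 < e -> 0 < i -> 0 < j ->
    convex_set (Fset beta1 beta2 gamma rho1 rho2 sigma1 sigma2 alpha2 alpha3 umax s e i j).
Proof.
move=> s e i j hs0 he hi hj x y t [u1 [hu10 [hu1m [x0 [x1 [x2 [x3 x4]]]]]]]
  [u2 [hu20 [hu2m [y0 [y1 [y2 [y3 y4]]]]]]] ht0 ht1.
set a := beta1 * i. set b := beta2 * j.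
have ha : 0 < a by rewrite /a mulr_gt0.
have hb : 0 < b by rewrite /b mulr_gt0.
set v1 := 1 - u1. set v2 := 1 - u2.
set c := t * (a * v1 ^+ 2 + b * v1) + (1 - t) * (a * v2 ^+ 2 + b * v2).
have hv1 : 0 < v1 by rewrite /v1; lra.
have hv2 : 0 < v2 by rewrite /v2; lra.
have hc : 0 <= c.
  rewrite /c; apply: addr_ge0; apply: mulr_ge0; try lra;
  apply: addr_ge0; apply: mulr_ge0; try lra; apply: exprn_ge0; lra.
set D := b ^+ 2 + 4%:R * a * c.
have hD : 0 <= D by rewrite /D; apply: addr_ge0; [apply: exprn_ge0; lra|
  apply: mulr_ge0 => //; apply: mulr_ge0; lra].
set S := Num.sqrt D.
have hS0 : 0 <= S by apply: sqrtr_ge0.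
have hS2 : S ^+ 2 = D by rewrite sqr_sqrtr.
set v := (S - b) / (2%:R * a).
have h2av : 2%:R * a * v = S - b by rewrite /v; field; lra.
have hphi : a * v ^+ 2 + b * v = c.
  have h4a : 4%:R * a * (a * v ^+ 2 + b * v - c) = 0.
    have -> : 4%:R * a * (a * v ^+ 2 + b * v - c) =
      (2%:R * a * v) ^+ 2 + 2%:R * b * (2%:R * a * v) - 4%:R * a * c by ring.
    rewrite h2av; rewrite -[_ ^+ 2 + _ - _]/((S - b) ^+ 2 + 2%:R * b * (S - b) - 4%:R * a * c).
    have -> : (S - b) ^+ 2 + 2%:R * b * (S - b) - 4%:R * a * c = S ^+ 2 - D by rewrite /D; ring.
    by rewrite hS2 subrr.
  move/eqP: h4a; rewrite mulf_eq0 subr_eq0 => /orP [|/eqP //].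
  rewrite mulf_eq0 => /orP [] /eqP ?; lra.
have hSb : b <= S.
  have : b ^+ 2 <= S ^+ 2.
    rewrite hS2 /D lerDl; apply: mulr_ge0 => //; apply: mulr_ge0; lra.
  move=> h; rewrite leNgt; apply/negP => hlt.
  have : S * S < b * b by apply: ltr_pM.
  rewrite -!expr2; lra.
have hv0 : 0 <= v by rewrite /v; apply: divr_ge0; lra.
set w := t * v1 + (1 - t) * v2.
have hw0 : 0 <= w by rewrite /w; apply: addr_ge0; apply: mulr_ge0; lra.
have hphiw : a * w ^+ 2 + b * w <= c.
  have -> : c = a * w ^+ 2 + b * w + a * t * (1 - t) * (v1 - v2) ^+ 2
    by rewrite /c /w; ring.
  rewrite lerDl; apply: mulr_ge0; [apply: mulr_ge0; [apply: mulr_ge0; lra| lra] | apply: sqr_ge0].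
have hvw : w <= v.
  rewrite leNgt; apply/negP => hlt.
  have := @phi_mono _ _ _ _ _ ha hb hv0 hlt.
  lra.
have hc1 : c <= a + b.
  have e1 : a * v1 ^+ 2 + b * v1 <= a + b.
    have := @phi_le _ _ _ v1 1 ha hb (ltW hv1); rewrite expr1n !mulr1; apply; rewrite /v1; lra.
  have e2 : a * v2 ^+ 2 + b * v2 <= a + b.
    have := @phi_le _ _ _ v2 1 ha hb (ltW hv2); rewrite expr1n !mulr1; apply; rewrite /v2; lra.
  have f1 := ler_wpM2l ht0 e1.
  have f2 := ler_wpM2l (_ : 0 <= 1 - t) e2.
  have -> : a + b = t * (a + b) + (1 - t) * (a + b) by ring.
  rewrite /c; apply: lerD => //; apply: f2; lra.
have hv1' : v <= 1.
  rewrite leNgt; apply/negP => hlt.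
  have := @phi_mono _ _ _ _ _ ha hb ler01 hlt; rewrite expr1n !mulr1.
  lra.
set m := t * u1 + (1 - t) * u2.
have hwm : w = 1 - m by rewrite /w /m /v1 /v2; ring.
have hmu : m <= umax.
  have h1 : t * u1 <= t * umax by apply: ler_wpM2l.
  have h2 : (1 - t) * u2 <= (1 - t) * umax by apply: ler_wpM2l; lra.
  have -> : umax = t * umax + (1 - t) * umax by ring.
  rewrite /m; lra.
have hum : 1 - v <= m by lra.
exists (1 - v); split; first lra.
split; first lra.
have hgg : forall u, beta1 * (1 - u) ^+ 2 * i + beta2 * (1 - u) * j
    = a * (1 - u) ^+ 2 + b * (1 - u) by move=> u; rewrite /a /b; ring.
rewrite !mxE x0 x1 x2 x3 y0 y1 y2 y3 !hgg -/v1 -/v2.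
have -> : 1 - (1 - v) = v by ring.
rewrite hphi.
split; first by rewrite /c; ring.
split; first by rewrite /c; ring.
split; first by ring.
split; first by ring.
have hsq : (1 - v) ^+ 2 <= t * u1 ^+ 2 + (1 - t) * u2 ^+ 2.
  have h1 : (1 - v) ^+ 2 <= m ^+ 2.
    rewrite !expr2; apply: ler_pM; lra.
  have : m ^+ 2 <= t * u1 ^+ 2 + (1 - t) * u2 ^+ 2.
    have -> : t * u1 ^+ 2 + (1 - t) * u2 ^+ 2 = m ^+ 2 + t * (1 - t) * (u1 - u2) ^+ 2
      by rewrite /m; ring.
    rewrite lerDl; apply: mulr_ge0; [apply: mulr_ge0; lra | apply: sqr_ge0].
  lra.
have hh : 0 <= 2%:R^-1 * alpha3 by apply: mulr_ge0; [rewrite invr_ge0; lra | lra].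
have hk := ler_wpM2l hh hsq.
move: x4 y4; rewrite /= => x4 y4.
have hx := ler_wpM2l ht0 x4.
have hy : 0 <= 1 - t by lra.
have hy' := ler_wpM2l hy y4.
set A := alpha2 * (e + i + j).
set K := 2%:R^-1 * alpha3.
have -> : A + K * (1 - v) ^+ 2 = t * A + (1 - t) * A + K * (1 - v) ^+ 2 by ring.
have E1 : t * (A + K * u1 ^+ 2) = t * A + t * (K * u1 ^+ 2) by ring.
have E2 : (1 - t) * (A + K * u2 ^+ 2) = (1 - t) * A + (1 - t) * (K * u2 ^+ 2) by ring.
have E3 : K * (t * u1 ^+ 2 + (1 - t) * u2 ^+ 2) = t * (K * u1 ^+ 2) + (1 - t) * (K * u2 ^+ 2) by ring.
rewrite -/A -/K in hx hy' hk.
lra.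
Qed.
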